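(* Let $k\ge 4$, $n=2k-1$, and $\lambda\in\overline{\mathcal{U}}_{T_n}$. Then the Young diagram $\mathrm{KN}(S_\lambda)$ has exactly $3n-3$ cells; consequently the sum of the hook lengths of the cells on its main diagonal is $3n-3$.
   Context: A partition of $N$ into distinct parts is a sequence $\lambda=(\lambda_1<\dots<\lambda_t)$ of positive integers with sum $N$ and $t\ge 2$, identified with its set of parts. Missing parts: $\mathcal{M}_\lambda=\{1,\dots,\lambda_t\}\setminus\lambda$. $\lambda$ is refinable if two distinct missing parts sum to a part of $\lambda$, unrefinable otherwise; $\mathcal{U}_N$ is the set of unrefinable partitions of $N$. An element of $\mathcal{U}_N$ is maximal if its largest part is the maximum of the largest parts of elements of $\mathcal{U}_N$; $\widetilde{\mathcal{U}}_N$ is the set of these and $\overline{\mathcal{U}}_N=\{\lambda\in\widetilde{\mathcal{U}}_N:\#\mathcal{M}_\lambda=\lfloor\lambda_t/2\rfloor\}$. $T_n=n(n+1)/2$. $S_\lambda=\mathbb{N}_0\setminus\lambda$. The Keith–Nath transformation sends a set $S\subseteq\mathbb{N}_0$ with $0\in S$ and finite complement to the Young diagram $\mathrm{KN}(S)$ whose boundary is the lattice path that, starting at the origin, takes for $j=0,1,\dots,\max(\mathbb{N}_0\setminus S)$ an east step if $j\in S$ and a north step otherwise (the region between this path, the vertical axis and the horizontal line at the path's final height). Diagrams are in English convention; the hook length of a cell is (cells to its right in its row) + (cells below it in its column) + 1; the main diagonal consists of the cells in row $i$ and column $i$. *)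

(* Defs.v *)
From mathcomp Require Import all_boot.
Set Implicit Arguments. Unset Strict Implicit. Unset Printing Implicit Defensive.

(* A partition of N into distinct parts, represented by the strictly increasing
   sequence of its parts lambda_1 < ... < lambda_t (identified with its set of parts). *)
Definition distinct_partition (N : nat) (la : seq nat) : bool :=
  [&& sorted ltn la, all (fun x => 0 < x) la, sumn la == N & 2 <= size la].

Definition largest_part (la : seq nat) : nat := last 0 la.

Definition missing_parts (la : seq nat) : seq nat :=
  [seq m <- iota 1 (largest_part la) | m \notin la].

Definition refinable (la : seq nat) : bool :=
  has (fun a => has (fun b => (a != b) && (a + b \in la)) (missing_parts la))
      (missing_parts la).

Definition unrefinable_partition (N : nat) (la : seq nat) : Prop :=
  distinct_partition N la /\ ~~ refinable la.

Definition maximal_unrefinable (N : nat) (la : seq nat) : Prop :=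
  unrefinable_partition N la /\
  forall mu, unrefinable_partition N mu -> largest_part mu <= largest_part la.

Definition Ubar (N : nat) (la : seq nat) : Prop :=
  maximal_unrefinable N la /\ size (missing_parts la) = (largest_part la)./2.

Definition T (n : nat) : nat := n * n.+1 %/ 2.

Definition S_lambda (la : seq nat) : pred nat := fun j => j \notin la.

(* Keith--Nath transformation of S (with 0 in S and finite complement whose
   maximum is m): the lattice path from the origin, for j = 0..m, takes an
   east step if j \in S and a north step otherwise.  [true] = north step. *)
Definition KN_path (S : pred nat) (m : nat) : seq bool :=
  [seq ~~ S j | j <- iota 0 m.+1].

(* Row lengths of the region between the path, the vertical axis and the
   horizontal line at the final height: the row just left of the i-th north
   step has length = number of east steps before it.  Listed from the bottom. *)
Definition KN_rows_bottom_up (p : seq bool) : seq nat :=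
  [seq count negb (take i p) | i <- iota 0 (size p) & nth false p i].

Definition KN_shape (S : pred nat) (m : nat) : seq nat :=
  rev (KN_rows_bottom_up (KN_path S m)).

(* Cells (row, column), 0-indexed, English convention. *)
Definition cells (sh : seq nat) : seq (nat * nat) :=
  [seq (r, c) | r <- iota 0 (size sh), c <- iota 0 (nth 0 sh r)].

Definition hook_length (sh : seq nat) (x : nat * nat) : nat :=
  let: (r, c) := x in
  (nth 0 sh r - c.+1) + count (fun r' => c < nth 0 sh r') (iota r.+1 (size sh - r.+1)) + 1.

Definition diagonal_cells (sh : seq nat) : seq (nat * nat) :=
  [seq x <- cells sh | x.1 == x.2].

Definition diagonal_hook_sum (sh : seq nat) : nat :=
  sumn [seq hook_length sh x | x <- diagonal_cells sh].

(* KN(S_lambda): max (N_0 \ S_lambda) = max lambda = largest part. *)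
Definition KN_of_partition (la : seq nat) : seq nat :=
  KN_shape (S_lambda la) (foldr maxn 0 la).

(* Main.v *)
Require Import Defs.
From mathcomp Require Import all_boot zify.

Lemma path_le_last x s : path ltn x s -> x <= last x s /\ forall y, y \in s -> y <= last x s.
Proof.
elim: s x => [|y s IH] x /=; first by split.
move=> /andP [hxy hp]. have [h1 h2] := IH y hp. split; first lia.
move=> z; rewrite in_cons => /orP [/eqP -> //| hz]. exact: h2.
Qed.
Lemma path_sum_lb a s : path ltn a s -> size s * (2 * a + size s + 1) <= 2 * sumn s.
Proof.
elim: s a => [|x s IH] a //= /andP [hax hp]. have := IH x hp. nia.
Qed.

Lemma size_cells sh : size (cells sh) = sumn sh.
Proof.
rewrite /cells size_allpairs_dep.
rewrite (eq_map (fun r => size_iota 0 (nth 0 sh r))).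
by rewrite -/(mkseq _ _) mkseq_nth.
Qed.

Lemma diag_cellsE sh : diagonal_cells sh =
  [seq (r, r) | r <- iota 0 (size sh) & r < nth 0 sh r].
Proof.
rewrite /diagonal_cells /cells.
elim: (iota 0 (size sh)) => [|r rs IH] //=.
rewrite filter_cat IH.
case: ifP => H /=.
- idtac.
  rewrite filter_map /=.
  have -> : [seq x <- iota 0 (nth 0 sh r) | preim (pair r) (fun x => x.1 == x.2) x]
      = [seq x <- iota 0 (nth 0 sh r) | pred1 r x].
    by apply: eq_filter => x /=.
  by rewrite filter_pred1_uniq ?iota_uniq // ?mem_iota /= add0n.
- rewrite filter_map /=.
  have -> : [seq x <- iota 0 (nth 0 sh r) | preim (pair r) (fun x => x.1 == x.2) x] = [::].
    apply/eqP; rewrite -(negbK (_ == _)) -has_filter; apply/hasPn => x.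
    rewrite mem_iota /= add0n => Hx; apply/eqP => E; subst x. by rewrite Hx in H.
  by [].
Qed.

Definition Dg (sh : seq nat) :=
  sumn [seq hook_length sh (r, r) | r <- iota 0 (size sh) & r < nth 0 sh r].

Lemma nth_predn s r : nth 0 (map predn s) r = (nth 0 s r).-1.
Proof.
case: (ltnP r (size s)) => h; first by rewrite (nth_map 0).
by rewrite !nth_default ?size_map.
Qed.

Lemma iota_succ m k : iota m.+1 k = map (addn 1) (iota m k).
Proof. by rewrite -iotaDl add1n. Qed.

Lemma hook_succ a s r :
  hook_length (a :: s) (r.+1, r.+1) = hook_length (map predn s) (r, r).
Proof.
rewrite /hook_length /= size_map nth_predn subSS.
rewrite iota_succ count_map.
have -> : count (preim (addn 1) (fun r' => r.+1 < nth 0 (a :: s) r'))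
            (iota r.+1 (size s - r.+1)) =
          count (fun r' => r < nth 0 [seq i.-1 | i <- s] r') (iota r.+1 (size s - r.+1)).
  apply: eq_count => x /=. rewrite nth_predn ?add1n /=. by case: (nth 0 s x).
congr (_ + _ + _). lia.
Qed.

Lemma sumn_predn s : sumn (map predn s) + count (fun x => 0 < x) s = sumn s.
Proof. elim: s => //= x s IH. case: x => [|x] /=; lia. Qed.

Lemma hook_zero a s : 0 < a ->
  hook_length (a :: s) (0, 0) = a + count (fun x => 0 < x) s.
Proof.
move=> Ha. rewrite /hook_length /= subn1 /= iota_succ count_map subn1 /=.
have -> : count (preim (addn 1) (fun r' => 0 < nth 0 (a :: s) r')) (iota 0 (size s))
   = count (fun x => 0 < x) (map (nth 0 s) (iota 0 (size s))).
  rewrite count_map. apply: eq_count => x /=. by rewrite ?add1n.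
rewrite -/(mkseq _ _) mkseq_nth. lia.
Qed.

Arguments hook_length : simpl never.

Lemma Dg_eq sh : sorted (fun a b => b <= a) sh -> Dg sh = sumn sh.
Proof.
have [n] := ubnP (size sh); elim: n sh => // n IH [|a s] //= Hsz Hs.
case: a Hs => [|a] Hs.
- have Hall : all (fun x => x <= 0) s.
    by move: Hs; rewrite /= path_sortedE; [case/andP | move=> x y z h1 h2; apply: leq_trans h2 h1].
  have Hz : forall r, nth 0 (0 :: s) r = 0.
    move=> [|r] //=. case: (ltnP r (size s)) => h; last by rewrite nth_default.
    by move/allP: Hall => /(_ _ (mem_nth 0 h)); rewrite leqn0 => /eqP.
  have -> : sumn s = 0.
    elim: s Hall {Hsz Hs Hz} => //= x s IHs /andP [hx hs]. rewrite IHs //. lia.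
  rewrite /Dg. 
  have -> : [seq r <- iota 0 (size (0 :: s)) | r < nth 0 (0 :: s) r] = [::].
    apply/eqP; rewrite -(negbK (_ == _)) -has_filter; apply/hasPn => x _.
    by rewrite Hz.
  by [].
- rewrite /Dg /= iota_succ filter_map -map_comp /=.
  rewrite (eq_filter (a2 := fun x => x < nth 0 (map predn s) x)); last first.
    move=> x /=. rewrite ?add1n nth_predn /=. by case: (nth 0 s x).
  rewrite (eq_map (g := fun x => hook_length (map predn s) (x, x))); last first.
    by move=> x /=; rewrite ?add1n hook_succ.
  have := IH (map predn s). rewrite /Dg size_map => -> //.
  + rewrite hook_zero //. have := sumn_predn s. lia.
  + rewrite sorted_map. move: Hs => /= /path_sorted. apply: sub_sorted => x y /=. lia.
Qed.

Lemma diag_hook_sum_eq sh : sorted (fun a b => b <= a) sh -> diagonal_hook_sum sh = sumn sh.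
Proof.
move=> Hs. rewrite -(@Dg_eq sh Hs) /diagonal_hook_sum diag_cellsE /Dg -map_comp. by [].
Qed.
Lemma sumn_map_add (f h : nat -> nat) s :
  {in s, forall x, f x + h x = x} -> sumn (map f s) + sumn (map h s) = sumn s.
Proof.
elim: s => //= x s IH H. have Hx := H x (mem_head _ _). rewrite -IH; first lia.
move=> y hy; apply: H; by rewrite in_cons hy orbT.
Qed.

Lemma count_lt_sorted s : sorted ltn s ->
  2 * sumn [seq count (fun q => q < p) s | p <- s] = size s * (size s).-1.
Proof.
elim: s => //= x s IH Hp.
have Hs : sorted ltn s := path_sorted Hp.
have Hall : all (ltn x) s by move: Hp; rewrite path_sortedE; [case/andP | exact: ltn_trans].
have -> : count (fun q => q < x) s = 0.
  apply/eqP; rewrite -leqn0 leqNgt -has_count; apply/hasPn => q hq.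
  move/allP: Hall => /(_ q hq) /=. lia.
rewrite ltnn /=.
have -> : [seq (x < p) + count (fun q => q < p) s | p <- s] = [seq 1 + count (fun q => q < p) s | p <- s].
  apply/eq_in_map => p hp. move/allP: Hall => /(_ p hp) /= ->. by [].
have E : forall t : seq nat, sumn [seq 1 + count (fun q => q < p) s | p <- t] = size t + sumn [seq count (fun q => q < p) s | p <- t].
  elim => //= y t IHt. rewrite IHt. lia.
rewrite E. have := IH Hs. case: (size s) => [|m] /=; lia.
Qed.

Lemma count_mem_iota (la : seq nat) p : uniq la ->
  count (mem la) (iota 0 p) = count (fun q => q < p) la.
Proof.
move=> Hu. rewrite -!size_filter. apply: perm_size. apply: uniq_perm.
- exact: filter_uniq (iota_uniq _ _).
- exact: filter_uniq.
- move=> x. rewrite !mem_filter mem_iota /= add0n. by rewrite andbC.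
Qed.

Lemma shape_facts la : path ltn 0 la -> la != [::] ->
  sorted (fun a b => b <= a) (KN_of_partition la) /\
  2 * sumn (KN_of_partition la) + size la * (size la).-1 = 2 * sumn la.
Proof.
move=> Hp Hne.
have Hs : sorted ltn la := path_sorted Hp.
have Hu : uniq la := sorted_uniq ltn_trans ltnn Hs.
have [_ Hle] := @path_le_last 0 la Hp.
set L := last 0 la in Hle.
have HL : foldr maxn 0 la = L.
  apply/eqP; rewrite eqn_leq; apply/andP; split.
  - have : forall s : seq nat, (forall y, y \in s -> y <= L) -> foldr maxn 0 s <= L.
      elim => //= x s IH H. rewrite geq_max H ?mem_head //=.
      apply: IH => y hy; apply: H; by rewrite in_cons hy orbT.
    by apply.
  - have : L \in la by rewrite /L; case: (la) Hne => // x s _ /=; rewrite mem_last.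
    elim: (la) => //= x s IH. rewrite in_cons => /orP [/eqP ->| h]; first exact: leq_maxl.
    apply: leq_trans (IH h) (leq_maxr _ _).
set g := fun p => count (fun j => j \notin la) (iota 0 p).
have Hpath : KN_path (S_lambda la) L = [seq j \in la | j <- iota 0 L.+1].
  apply: eq_map => j. by rewrite /S_lambda negbK.
have Hfil : [seq i <- iota 0 L.+1 | i \in la] = la.
  apply: (irr_sorted_eq ltn_trans ltnn).
  - apply: sorted_filter; [exact: ltn_trans | exact: iota_ltn_sorted].
  - exact: Hs.
  - move=> x. rewrite mem_filter mem_iota /= add0n ltnS.
    case hx: (x \in la) => //=. exact: Hle.
have Hrows : KN_rows_bottom_up (KN_path (S_lambda la) L) = map g la.
  rewrite Hpath /KN_rows_bottom_up size_map size_iota.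
  rewrite (eq_in_filter (a2 := fun i => i \in la)); last first.
    move=> i; rewrite mem_iota add0n => /andP [_ hi].
    by rewrite (nth_map 0) ?size_iota // nth_iota.
  rewrite Hfil. apply/eq_in_map => i hi.
  rewrite -map_take take_iota count_map /g.
  have -> : minn i L.+1 = i by have := Hle i hi; lia.
  by apply: eq_count.
have HKN : KN_of_partition la = rev (map g la) by rewrite /KN_of_partition HL /KN_shape Hrows.
rewrite HKN sumn_rev. split.
- rewrite rev_sorted sorted_map. apply: sub_sorted Hs => i j /= hij.
  rewrite /g. have -> : j = i + (j - i) by lia.
  by rewrite iotaD count_cat leq_addr.
- have := @count_lt_sorted la Hs.
  have := @sumn_map_add g (fun p => count (fun q => q < p) la) la.
  move=> H; rewrite -H; first lia.
  move=> x _. rewrite /g -count_mem_iota //.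
  have := count_predC (mem la) (iota 0 x). rewrite size_iota.
  have -> : count (predC (mem la)) (iota 0 x) = count (fun j => j \notin la) (iota 0 x) by [].
  lia.
Qed.
Lemma sumn_iota m n : 2 * sumn (iota m n) + n = n * (2 * m + n).
Proof. elim: n m => [|n IH] m //=. have := IH m.+1. nia. Qed.

Lemma count_mem_sub (s r : seq nat) : uniq s -> uniq r -> {subset s <= r} ->
  count (mem s) r = size s.
Proof.
move=> Hs Hr Hsub. rewrite -size_filter. apply: perm_size. apply: uniq_perm.
- exact: filter_uniq.
- exact: Hs.
- move=> x. rewrite mem_filter. apply/andP/idP => [[]//|h]. split => //. exact: Hsub.
Qed.

Lemma sumn_mem_sub (s r : seq nat) : uniq s -> uniq r -> {subset s <= r} ->
  sumn [seq x <- r | x \in s] = sumn s.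
Proof.
move=> Hs Hr Hsub. apply: perm_sumn. apply: uniq_perm.
- exact: filter_uniq.
- exact: Hs.
- move=> x. rewrite mem_filter. apply/andP/idP => [[]//|h]. split => //. exact: Hsub.
Qed.

Lemma sumn_filter_split (a : pred nat) s :
  sumn [seq x <- s | a x] + sumn [seq x <- s | ~~ a x] = sumn s.
Proof. elim: s => //= x s IH. case: (a x) => /=; lia. Qed.

Lemma missing_size la : path ltn 0 la -> la != [::] ->
  size (missing_parts la) = largest_part la - size la.
Proof.
move=> Hp Hne.
have Hs : sorted ltn la := path_sorted Hp.
have Hu : uniq la := sorted_uniq ltn_trans ltnn Hs.
have [_ Hle] := @path_le_last 0 la Hp.
have Hpos : all (ltn 0) la by move: Hp; rewrite path_sortedE; [case/andP | exact: ltn_trans].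
rewrite /missing_parts size_filter /largest_part.
have := count_predC (mem la) (iota 1 (last 0 la)).
rewrite (@count_mem_sub la) ?iota_uniq // ?size_iota.
- have -> : count (predC (mem la)) (iota 1 (last 0 la)) = count (fun m => m \notin la) (iota 1 (last 0 la)) by [].
  lia.
- move=> x hx. rewrite mem_iota. move/allP: Hpos => /(_ x hx) /= h1. have := Hle x hx. lia.
Qed.

Lemma key n la : 7 <= n -> path ltn 0 la -> 2 * sumn la = n * n.+1 ->
  ~~ refinable la -> size la = last 0 la - (last 0 la)./2 -> 2 <= size la ->
  size la <= n - 2.
Proof.
move=> Hn Hp Hsum Hun Hsz H2.
case/lastP: la Hp Hsum Hun Hsz H2 => [//|B L] Hp Hsum Hun Hsz H2.
rewrite rcons_path in Hp. case/andP: Hp => HpB HlB.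
rewrite last_rcons size_rcons in Hsz. rewrite size_rcons in H2 *.
have HsumE : sumn (rcons B L) = sumn B + L by rewrite -cats1 sumn_cat /=; lia.
rewrite HsumE in Hsum. clear HsumE.
have HlbB := @path_sum_lb 0 B HpB. rewrite muln0 add0n in HlbB.
rewrite leqNgt; apply/negP => Hgt.
have [Hbig|Heq] : n - 1 <= size B \/ size B = n - 2 by lia.
- have h := leq_mul Hbig (leq_add Hbig (leqnn 1)).
  have E1 : n * n.+1 = (n - 1) * (n - 1 + 1) + 2 * n by clear -Hn; nia.
  lia.
- case/lastP: B HpB HlB Hsum HlbB Hsz H2 Hgt Heq Hun => [|B' b] HpB HlB Hsum HlbB Hsz H2 Hgt Heq Hun.
    by rewrite /= in Heq; lia.
  rewrite rcons_path in HpB. case/andP: HpB => HpB' Hlb'.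
  rewrite last_rcons in HlB. rewrite size_rcons in Hsz H2 Hgt Heq.
  have HsumE' : sumn (rcons B' b) = sumn B' + b by rewrite -cats1 sumn_cat /=; lia.
  rewrite HsumE' in Hsum.
  have HlbB' := @path_sum_lb 0 B' HpB'. rewrite muln0 add0n in HlbB'.
  have HszB' : size B' = n - 3 by lia.
  rewrite HszB' in HlbB'.
  have E2 : n * n.+1 = (n - 3) * (n - 3 + 1) + 6 * n - 6 by clear -Hn; nia.
  have Hb : b <= n by lia.
  have HL1 : n < L by lia.
  set B := rcons B' b.
  have HpB : path ltn 0 B by rewrite rcons_path HpB' Hlb'.
  have HuB : uniq B := sorted_uniq ltn_trans ltnn (path_sorted HpB).
  have HBle : forall y, y \in B -> 1 <= y <= n.
    move=> y hy. have [_ h] := @path_le_last 0 B HpB.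
    have := h y hy. rewrite /B last_rcons => hyb.
    move: HpB; rewrite path_sortedE; last exact: ltn_trans.
    case/andP => /allP /(_ y hy) /= h1 _. lia.
  have Hsub : {subset B <= iota 1 n}.
    move=> y hy. rewrite mem_iota. have := HBle y hy. lia.
  set M2 := [seq m <- iota 1 n | m \notin B].
  have HM2size : size M2 = 2.
    rewrite size_filter. have := count_predC (mem B) (iota 1 n).
    rewrite (@count_mem_sub B) ?iota_uniq // size_iota.
    have -> : count (predC (mem B)) (iota 1 n) = count (fun m => m \notin B) (iota 1 n) by [].
    rewrite /B size_rcons. lia.
  have HM2sum : sumn M2 = L.
    have := sumn_filter_split (mem B) (iota 1 n).
    rewrite (@sumn_mem_sub B) ?iota_uniq //.
    have := sumn_iota 1 n. rewrite /M2 /B HsumE'.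
    have E3 : n * (2 * 1 + n) = n * n.+1 + n by clear; nia.
    move=> h1. rewrite (_ : [seq x <- iota 1 n | ~~ mem (rcons B' b) x] = [seq m <- iota 1 n | m \notin rcons B' b]) // => h2. lia.
  have HM2uniq : uniq M2 by apply: filter_uniq; exact: iota_uniq.
  have HM2mem : forall c, c \in M2 -> c \in missing_parts (rcons B L).
    move=> c. rewrite /M2 mem_filter mem_iota => /andP [hcB hc].
    rewrite /missing_parts /largest_part last_rcons mem_filter mem_iota mem_rcons in_cons.
    rewrite (negbTE hcB) orbF. apply/andP; split; first (apply/eqP; lia). lia.
  move/negP: Hun; apply.
  case HM: M2 HM2size HM2sum HM2uniq HM2mem => [|c [|d [|e r]]] //= _ Hcd /andP [Hcd' _] Hmem.
  apply/hasP; exists c; first by apply: Hmem; rewrite mem_head.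
  apply/hasP; exists d; first by apply: Hmem; rewrite in_cons mem_head orbT.
  rewrite in_cons negb_or in Hcd'. case/andP: Hcd' => -> _ /=.
  have -> : c + d = L by lia.
  by rewrite mem_rcons mem_head.
Qed.

Lemma iota_path m j : path ltn m (iota m.+1 j) /\ last m (iota m.+1 j) = m + j.
Proof.
elim: j m => [|j IH] m /=; first by rewrite addn0.
have [h1 h2] := IH m.+1. rewrite ltnSn h1 h2. split => //. lia.
Qed.

Lemma witness n : 7 <= n ->
  unrefinable_partition (n * n.+1 %/ 2) (iota 1 (n - 3) ++ [:: n.+1; 2 * n - 4]) /\
  largest_part (iota 1 (n - 3) ++ [:: n.+1; 2 * n - 4]) = 2 * n - 4.
Proof.
move=> Hn. set mu := iota 1 (n - 3) ++ [:: n.+1; 2 * n - 4].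
have Hlast : largest_part mu = 2 * n - 4 by rewrite /largest_part /mu last_cat.
have Hp : path ltn 0 mu.
  have [h1 h2] := iota_path 0 (n - 3).
  rewrite /mu cat_path h1 h2 /=. apply/and3P; split => //; apply/ltP; lia.
have Hmu : forall x, x \in mu -> x <= 2 * n - 4.
  move=> x. rewrite /mu mem_cat mem_iota !in_cons in_nil orbF.
  case/orP => [h|/orP [/eqP ->|/eqP ->]]; lia.
split => //. split.
- rewrite /distinct_partition.
  move: (Hp); rewrite path_sortedE; last exact: ltn_trans.
  case/andP => ha hs. rewrite hs ha /=.
  have h2 : 2 * sumn mu = n * n.+1.
    rewrite /mu sumn_cat /=. have := sumn_iota 1 (n - 3).
    have E : (n - 3) * (2 * 1 + (n - 3)) + 6 * n - 6 = n * n.+1 + (n - 3) by clear -Hn; nia.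
    lia.
  rewrite -h2 mulKn //= /mu size_cat eqxx /=. lia.
- rewrite /refinable. apply/hasPn => a Ha. apply/hasPn => b Hb. apply/negP => /andP [Hab Hin].
  move: Ha Hb. rewrite /missing_parts Hlast !mem_filter !mem_iota.
  rewrite /mu !mem_cat !mem_iota.
  case/andP => /norP [Ha1 _] /andP [Ha2 _].
  case/andP => /norP [Hb1 _] /andP [Hb2 _].
  have Ha3 : n - 3 < a by move: Ha1; rewrite Ha2 /=; lia.
  have Hb3 : n - 3 < b by move: Hb1; rewrite Hb2 /=; lia.
  have := Hmu _ Hin. move/eqP: Hab. lia.
Qed.

Theorem proposition3p9 (k : nat) (hk : 4 <= k) (la : seq nat) :
  Ubar (T (2 * k - 1)) la ->
  size (cells (KN_of_partition la)) = 3 * (2 * k - 1) - 3 /\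
  diagonal_hook_sum (KN_of_partition la) = 3 * (2 * k - 1) - 3.
Proof.
move=> [[[Hdp Hun] Hmax] Hsz].
case/and4P: Hdp => Hs Hpos /eqP Hsum H2.
have Hp : path ltn 0 la by rewrite path_sortedE ?Hpos ?Hs //; exact: ltn_trans.
have Hne : la != [::] by case: (la) H2.
have Hn : 7 <= 2 * k - 1 by lia.
have HT : T (2 * k - 1) = (2 * k - 1) * k.
  rewrite /T. have -> : (2 * k - 1).+1 = 2 * k by lia.
  by rewrite mulnCA mulKn.
rewrite HT in Hsum.
have E0 : (2 * k - 1) * (2 * k - 1).+1 = 2 * ((2 * k - 1) * k).
  have -> : (2 * k - 1).+1 = 2 * k by lia. by rewrite mulnCA.
have [Hwit Hlp] := @witness (2 * k - 1) Hn.
have := Hmax _ Hwit. rewrite Hlp => HLge.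
have Hms := @missing_size la Hp Hne. rewrite Hsz in Hms.
move: HLge Hms. rewrite /largest_part => HLge Hms.
have H2sum : 2 * sumn la = (2 * k - 1) * (2 * k - 1).+1 by rewrite E0 Hsum.
have Hk := @key (2 * k - 1) la Hn Hp H2sum Hun (ltac:(lia)) H2.
have Ht : size la = 2 * k - 3.
  move: Hms HLge Hk hk; rewrite -divn2. set L := last 0 la. set t := size la. clear. lia.
have [Hsort Hsh] := @shape_facts la Hp Hne.
rewrite size_cells diag_hook_sum_eq //. rewrite Ht Hsum in Hsh.
have E : (2 * k - 3) * (2 * k - 3).-1 + 12 * k - 12 = 2 * ((2 * k - 1) * k) by clear -hk; nia.
split; lia.
Qed.
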